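(* Let $G$ be a graph with no induced $P_7$, $C_4$, $C_6$ or $C_7$ and let $H=(B_1,\dots,B_5)$ be a nice blowup of $C_5$ in $G$. Then $G[A_3(i)]$ contains no induced path on four vertices, for each $i\in\{1,\dots,5\}$.
   Context: Indices modulo $5$. A nice blowup of $C_5$ is a tuple $(B_1,\dots,B_5)$ of pairwise disjoint cliques such that every vertex of $B_j$ has a neighbor in $B_{j-1}$ and in $B_{j+1}$, $B_j$ is anticomplete to $B_{j+2}$, and there are no $a\in B_j$, distinct $b,c\in B_{j+1}$, $d\in B_{j+2}$ with $G[\{a,b,c,d\}]\cong P_4$; $V(H)=\bigcup B_j$. For $v\notin V(H)$, $\operatorname{supp}(v)$ is the set of $j$ such that $v$ has a neighbor in $B_j$; $A_3(i)=\{v\notin V(H):\operatorname{supp}(v)=\{i-1,i,i+1\}\}$. *)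

(* Defs.v *)
From mathcomp Require Import all_boot.
Set Implicit Arguments. Unset Strict Implicit. Unset Printing Implicit Defensive.

Definition simple_graph (T : finType) (e : rel T) : Prop :=
  symmetric e /\ irreflexive e.

Definition induced_path (T : finType) (e : rel T) (s : seq T) : Prop :=
  uniq s /\ forall (x0 : T) (i j : nat), i < size s -> j < size s ->
    e (nth x0 s i) (nth x0 s j) = (i == j.+1) || (j == i.+1).

Definition induced_cycle (T : finType) (e : rel T) (s : seq T) : Prop :=
  uniq s /\ forall (x0 : T) (i j : nat), i < size s -> j < size s ->
    e (nth x0 s i) (nth x0 s j) =
      (i == j.+1 %% size s) || (j == i.+1 %% size s).

Definition has_induced_P (T : finType) (e : rel T) (k : nat) : Prop :=
  exists s : seq T, size s = k /\ induced_path e s.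
Definition has_induced_C (T : finType) (e : rel T) (k : nat) : Prop :=
  exists s : seq T, size s = k /\ induced_cycle e s.

Definition is_clique (T : finType) (e : rel T) (A : {set T}) : Prop :=
  forall x y, x \in A -> y \in A -> x != y -> e x y.

Definition anticomplete (T : finType) (e : rel T) (A B : {set T}) : Prop :=
  forall x y, x \in A -> y \in B -> ~~ e x y.

Definition induces_P4 (T : finType) (e : rel T) (a b c d : T) : Prop :=
  exists s : seq T, size s = 4 /\ perm_eq s [:: a; b; c; d] /\ induced_path e s.

(* Indices modulo 5: ordS = j+1, ord_pred = j-1 in 'I_5. *)
Definition nxt (j : 'I_5) : 'I_5 := ordS j.
Definition prv (j : 'I_5) : 'I_5 := ord_pred j.

Definition nice_blowup (T : finType) (e : rel T) (B : 'I_5 -> {set T}) : Prop :=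
  [/\ (forall j k, j != k -> [disjoint B j & B k]),
      (forall j, is_clique e (B j)),
      (forall j v, v \in B j ->
         (exists2 u, u \in B (prv j) & e v u) /\
         (exists2 u, u \in B (nxt j) & e v u)),
      (forall j, anticomplete e (B j) (B (nxt (nxt j)))) &
      (forall j a b c d, a \in B j -> b \in B (nxt j) -> c \in B (nxt j) ->
         b != c -> d \in B (nxt (nxt j)) -> ~ induces_P4 e a b c d)].

Definition VH (T : finType) (B : 'I_5 -> {set T}) : {set T} :=
  \bigcup_(j < 5) B j.

Definition supp (T : finType) (e : rel T) (B : 'I_5 -> {set T}) (v : T)
  : {set 'I_5} := [set j | [exists u in B j, e v u]].

Definition A3 (T : finType) (e : rel T) (B : 'I_5 -> {set T}) (i : 'I_5)
  : {set T} :=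
  [set v | (v \notin VH B) && (supp e B v == [set prv i; i; nxt i])].

(* Main.v *)
Require Import Defs.
From mathcomp Require Import all_boot.
Set Implicit Arguments. Unset Strict Implicit. Unset Printing Implicit Defensive.

Section Cyc.
Variables (T : finType) (e : rel T).
Hypothesis sym : symmetric e.
Hypothesis irr : irreflexive e.

Lemma adj_neq u v : e u v -> u != v.
Proof. by apply: contraTneq => ->; rewrite irr. Qed.

Lemma C4_of p q r s : e p q -> e q r -> e r s -> e s p ->
  e p r = false -> e q s = false -> p != r -> q != s -> has_induced_C e 4.
Proof.
move=> pq qr rs sp pr qs npr nqs.
have npq := adj_neq pq; have nqr := adj_neq qr; have nrs := adj_neq rs.
have nsp := adj_neq sp.
exists [:: p; q; r; s]; split => //; split.
  rewrite /= !inE !negb_or npq npr nqr nqs nrs /= andbT.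
  by rewrite eq_sym nsp.
move=> x0 i j Hi Hj.
have rp : e r p = false by rewrite sym.
have sq : e s q = false by rewrite sym.
case: i Hi => [|[|[|[|i]]]] //= _; case: j Hj => [|[|[|[|j]]]] //= _;
  by rewrite ?irr ?pq ?qr ?rs ?sp ?pr ?qs ?rp ?sq // sym ?pq ?qr ?rs ?sp.
Qed.

Lemma C6_of v0 v1 v2 v3 v4 v5 :
  e v0 v1 -> e v1 v2 -> e v2 v3 -> e v3 v4 -> e v4 v5 -> e v5 v0 ->
  e v0 v2 = false -> e v0 v3 = false -> e v0 v4 = false ->
  e v1 v3 = false -> e v1 v4 = false -> e v1 v5 = false ->
  e v2 v4 = false -> e v2 v5 = false -> e v3 v5 = false ->
  has_induced_C e 6.
Proof.
move=> e01 e12 e23 e34 e45 e50 n02 n03 n04 n13 n14 n15 n24 n25 n35.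
have e10 : e v1 v0 by rewrite sym.
have e21 : e v2 v1 by rewrite sym.
have e32 : e v3 v2 by rewrite sym.
have e43 : e v4 v3 by rewrite sym.
have e54 : e v5 v4 by rewrite sym.
have e05 : e v0 v5 by rewrite sym.
have n20 : e v2 v0 = false by rewrite sym.
have n30 : e v3 v0 = false by rewrite sym.
have n40 : e v4 v0 = false by rewrite sym.
have n31 : e v3 v1 = false by rewrite sym.
have n41 : e v4 v1 = false by rewrite sym.
have n51 : e v5 v1 = false by rewrite sym.
have n42 : e v4 v2 = false by rewrite sym.
have n52 : e v5 v2 = false by rewrite sym.
have n53 : e v5 v3 = false by rewrite sym.
have dist : forall u v w, e u w -> e v w = false -> u != v.
  by move=> u v w uw vw; apply: contraTneq uw => ->; rewrite vw.
exists [:: v0; v1; v2; v3; v4; v5]; split => //; split.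
  rewrite /= !inE !negb_or /= andbT.
  by repeat (apply/andP; split); apply/eqP => E; subst; congruence.
move=> x0 i j Hi Hj.
case: i Hi => [|[|[|[|[|[|i]]]]]] //= _; case: j Hj => [|[|[|[|[|[|j]]]]]] //= _;
  by rewrite ?irr.
Qed.
End Cyc.

Section Main.
Variables (T : finType) (e : rel T).
Hypothesis sym : symmetric e.
Hypothesis irr : irreflexive e.
Hypothesis noC4 : ~ has_induced_C e 4.
Hypothesis noC6 : ~ has_induced_C e 6.

Definition hasN (Z : {set T}) p := exists2 z, z \in Z & e z p.
Definition comm (Z : {set T}) p q := exists2 z, z \in Z & e z p && e z q.

Lemma c4in p q r z : e p q -> e q r -> e p r = false -> p != r ->
  e z p -> e z r -> z != q -> e z q.
Proof.
move=> pq qr pr npr zp zr nzq; apply/negPn/negP => zq.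
apply: noC4; apply: (@C4_of _ _ sym irr p q r z) => //.
- by rewrite sym.
- by apply/negbTE; rewrite sym.
- by rewrite eq_sym.
Qed.

Lemma nest (Z : {set T}) p q x x' : is_clique e Z -> p \notin Z -> q \notin Z ->
  x \in Z -> x' \in Z -> e p q -> e x p -> e x q = false -> e x' q -> e x' p.
Proof.
move=> cl pZ qZ xZ x'Z pq xp xq x'q; apply/negPn/negP => x'p.
have nxx : x' != x by apply: contraTneq x'q => ->; rewrite xq.
apply: noC4; apply: (@C4_of _ _ sym irr p q x' x) => //.
- by rewrite sym.
- exact: cl.
- by apply/negbTE; rewrite sym.
- by rewrite sym.
- by apply: contraNneq pZ => ->.
- by apply: contraNneq qZ => ->.
Qed.

Lemma hat (Z : {set T}) p q r : is_clique e Z -> p \notin Z -> q \notin Z ->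
  r \notin Z -> e p q -> e q r -> hasN Z p -> hasN Z q -> hasN Z r ->
  ~ comm Z p r ->
  (forall z, z \in Z -> e z p -> e z q) /\ (forall z, z \in Z -> e z r -> e z q).
Proof.
move=> cl pZ qZ rZ pq qr [zp zpZ zpp] [zq zqZ zqq] [zr0 zrZ zrr] nc.
have qp : e q p by rewrite sym.
case hp: (e zq p).
  have hr : e zq r = false.
    by apply/negbTE/negP => hr; apply: nc; exists zq => //; rewrite hp hr.
  have R : forall z, z \in Z -> e z r -> e z q.
    by move=> z zZ zrz; apply: (nest cl qZ rZ zqZ zZ qr zqq hr zrz).
  split => // z zZ zpz.
  have zrq := R _ zrZ zrr.
  have zrp : e zr0 p = false.
    by apply/negbTE/negP => h; apply: nc; exists zr0 => //; rewrite h zrr.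
  exact: (nest cl qZ pZ zrZ zZ qp zrq zrp zpz).
have P : forall z, z \in Z -> e z p -> e z q.
  by move=> z zZ zpz; apply: (nest cl qZ pZ zqZ zZ qp zqq hp zpz).
split => // z zZ zrz.
have zpq := P _ zpZ zpp.
have zpr : e zp r = false.
  by apply/negbTE/negP => h; apply: nc; exists zp => //; rewrite h zpp.
exact: (nest cl qZ rZ zpZ zZ qr zpq zpr zrz).
Qed.

Variables X Y : {set T}.
Hypothesis clX : is_clique e X.
Hypothesis clY : is_clique e Y.
Hypothesis anti : forall x y, x \in X -> y \in Y -> e x y = false.
Hypothesis disj : forall x, x \in X -> x \in Y -> False.

Lemma K2 p q : e p q = false -> p != q -> comm X p q -> comm Y p q -> False.
Proof.
move=> pq npq [x xX /andP[xp xq]] [y yY /andP[yp yq]].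
apply: noC4; apply: (@C4_of _ _ sym irr p x q y) => //.
- by rewrite sym.
- by rewrite sym.
- exact: anti.
- by apply/eqP => E; rewrite E in xX; exact: (disj xX yY).
Qed.

Lemma K1 p q : e p q = false -> p \notin X -> q \notin X -> p \notin Y -> q \notin Y ->
  hasN X p -> hasN X q -> hasN Y p -> hasN Y q -> comm X p q \/ comm Y p q.
Proof.
move=> pq pX qX pY qY [xp xpX xpp] [xq xqX xqq] [yp ypY ypp] [yq yqY yqq].
case h1: (e xp q); first by left; exists xp => //; rewrite xpp h1.
case h2: (e xq p); first by left; exists xq => //; rewrite xqq h2.
case h3: (e yp q); first by right; exists yp => //; rewrite ypp h3.
case h4: (e yq p); first by right; exists yq => //; rewrite yqq h4.
exfalso; apply: noC6.
have nx : xp != xq by apply: contraTneq xpp => ->; rewrite h2.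
have ny : yq != yp by apply: contraTneq ypp => <-; rewrite h4.
apply: (@C6_of _ _ sym irr p xp xq q yq yp) => //;
  first [ by rewrite sym | by apply: clX | by apply: clY | by apply: anti
        | by rewrite sym; apply: anti | idtac ].
Qed.

Variables a b c d : T.
Hypotheses (ab : e a b) (bc : e b c) (cd : e c d).
Hypotheses (ac : e a c = false) (bd : e b d = false) (ad : e a d = false).
Hypotheses (nac : a != c) (nbd : b != d) (nad : a != d).
Hypotheses (aX : a \notin X) (bX : b \notin X) (cX : c \notin X) (dX : d \notin X).
Hypotheses (aY : a \notin Y) (bY : b \notin Y) (cY : c \notin Y) (dY : d \notin Y).
Hypotheses (haX : hasN X a) (hbX : hasN X b) (hcX : hasN X c) (hdX : hasN X d).
Hypotheses (haY : hasN Y a) (hbY : hasN Y b) (hcY : hasN Y c) (hdY : hasN Y d).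

Lemma step1 (Z : {set T}) : is_clique e Z -> a \notin Z -> b \notin Z -> c \notin Z ->
  d \notin Z -> hasN Z a -> hasN Z b -> hasN Z c -> hasN Z d ->
  ~ comm Z a c -> ~ comm Z b d -> False.
Proof.
move=> cl aZ bZ cZ dZ ha hb hc hd n1 n2.
have [H1 _] := hat cl aZ bZ cZ ab bc ha hb hc n1.
have [H2 _] := hat cl bZ cZ dZ bc cd hb hc hd n2.
case: ha => z zZ za; apply: n1; exists z => //.
by rewrite za (H2 _ zZ (H1 _ zZ za)).
Qed.

Lemma final (Z W : {set T}) : is_clique e Z -> is_clique e W ->
  a \notin Z -> b \notin Z -> c \notin Z -> d \notin Z ->
  a \notin W -> b \notin W -> c \notin W -> d \notin W ->
  hasN Z a -> hasN Z b -> hasN Z c -> hasN Z d ->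
  hasN W a -> hasN W b -> hasN W c -> hasN W d ->
  ~ comm Z a c -> ~ comm W b d -> ~ comm Z a d /\ ~ comm W a d.
Proof.
move=> clZ clW aZ bZ cZ dZ aW bW cW dW haZ hbZ hcZ hdZ haW hbW hcW hdW n1 n2.
split.
  case=> z zZ /andP[za zd].
  have [H1 _] := hat clZ aZ bZ cZ ab bc haZ hbZ hcZ n1.
  have zb := H1 _ zZ za.
  have zc : e z c.
    apply: (c4in bc cd bd nbd zb zd).
    by apply: contraNneq cZ => <-.
  by apply: n1; exists z => //; rewrite za zc.
case=> z zW /andP[za zd].
have [_ H2] := hat clW bW cW dW bc cd hbW hcW hdW n2.
have zc := H2 _ zW zd.
have zb : e z b.
  apply: (c4in ab bc ac nac za zc).
  by apply: contraNneq bW => <-.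
by apply: n2; exists z => //; rewrite zb zd.
Qed.

Lemma main_contra : False.
Proof.
have acX : ~ comm X a c \/ ~ comm Y a c.
  case: (K1 ac aX cX aY cY haX hcX haY hcY) => h.
    by right => h'; apply: (K2 ac nac h h').
  by left => h'; apply: (K2 ac nac h' h).
have bdX : ~ comm X b d \/ ~ comm Y b d.
  case: (K1 bd bX dX bY dY hbX hdX hbY hdY) => h.
    by right => h'; apply: (K2 bd nbd h h').
  by left => h'; apply: (K2 bd nbd h' h).
have adK := K1 ad aX dX aY dY haX hdX haY hdY.
case: acX => h1; case: bdX => h2.
- exact: (step1 clX aX bX cX dX haX hbX hcX hdX h1 h2).
- have [m1 m2] := final clX clY aX bX cX dX aY bY cY dY haX hbX hcX hdX
     haY hbY hcY hdY h1 h2.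
  by case: adK.
- have [m1 m2] := final clY clX aY bY cY dY aX bX cX dX haY hbY hcY hdY
     haX hbX hcX hdX h1 h2.
  by case: adK.
- exact: (step1 clY aY bY cY dY haY hbY hcY hdY h1 h2).
Qed.
End Main.

Lemma A3_facts (T : finType) (e : rel T) (B : 'I_5 -> {set T}) i v :
  symmetric e -> v \in A3 e B i ->
  [/\ hasN e (B (prv i)) v, hasN e (B (nxt i)) v,
      v \notin B (prv i) & v \notin B (nxt i)].
Proof.
move=> sym; rewrite inE => /andP[vV /eqP vS].
have getN j : j \in supp e B v -> hasN e (B j) v.
  by rewrite inE => /existsP[u /andP[uB vu]]; exists u => //; rewrite sym.
have notin j : v \notin B j.
  by apply: contra vV => vB; apply/bigcupP; exists j.
split; [apply: getN | apply: getN | exact: notin | exact: notin];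
  by rewrite vS !inE eqxx ?orbT.
Qed.

Lemma nnp (j : 'I_5) : nxt (nxt (prv j)) = nxt j.
Proof. by apply/val_inj; case: j => [[|[|[|[|[|?]]]]] Hi]. Qed.
Lemma pn (j : 'I_5) : prv j != nxt j.
Proof. by case: j => [[|[|[|[|[|?]]]]] Hi]. Qed.

Theorem lemma8p5 (T : finType) (e : rel T) (B : 'I_5 -> {set T}) :
  simple_graph e ->
  ~ has_induced_P e 7 -> ~ has_induced_C e 4 ->
  ~ has_induced_C e 6 -> ~ has_induced_C e 7 ->
  nice_blowup e B ->
  forall i : 'I_5,
    ~ (exists s : seq T, size s = 4 /\ {subset s <= A3 e B i} /\
         induced_path e s).
Proof.
move=> [sym irr] _ noC4 noC6 _ [disjB clB _ antiB _] i [s [Hs [Hsub [Hu Hp]]]].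
case: s Hs Hsub Hu Hp => [|a [|b [|c [|d [|? ?]]]]] //= _ Hsub Hu Hp.
have ab : e a b := Hp a 0 1 isT isT.
have bc : e b c := Hp a 1 2 isT isT.
have cd : e c d := Hp a 2 3 isT isT.
have ac : e a c = false := Hp a 0 2 isT isT.
have bd : e b d = false := Hp a 1 3 isT isT.
have ad : e a d = false := Hp a 0 3 isT isT.
have nac : a != c by apply: contraTneq Hu => ->; rewrite /= !inE eqxx ?orbT.
have nbd : b != d by apply: contraTneq Hu => ->; rewrite /= !inE eqxx ?orbT ?andbF.
have nad : a != d by apply: contraTneq Hu => ->; rewrite /= !inE eqxx ?orbT.
have E := nnp i.
have npn := pn i.
have anti : forall x y, x \in B (prv i) -> y \in B (nxt i) -> e x y = false.
  by move=> x y xX yY; apply/negbTE; have := antiB (prv i) x y xX; rewrite E; apply.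
have disj : forall x, x \in B (prv i) -> x \in B (nxt i) -> False.
  by move=> x xX xY; rewrite (disjointFr (disjB _ _ npn) xX) in xY.
have [haX haY aX aY] := A3_facts sym (Hsub a (mem_head _ _)).
have [hbX hbY bX bY] := A3_facts sym (Hsub b ltac:(by rewrite !inE eqxx ?orbT)).
have [hcX hcY cX cY] := A3_facts sym (Hsub c ltac:(by rewrite !inE eqxx ?orbT)).
have [hdX hdY dX dY] := A3_facts sym (Hsub d ltac:(by rewrite !inE eqxx ?orbT)).
apply: (@main_contra _ _ sym irr noC4 noC6 (B (prv i)) (B (nxt i)) (clB _) (clB _)
  anti disj a b c d); try assumption.
Qed.
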